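(* Let $(K_n,\Sigma)$ be a signed complete graph with $n\geq4$, and let $X(\Sigma)$ be the set of edges $vw$ of $K_n$ such that the triangle $uvw$ is even for every $u\in V(K_n)\setminus\{v,w\}$. Then every connected component of the graph on $V(K_n)$ with edge set $X(\Sigma)$ is a complete graph.
   Context: A signed graph is a pair $(G,\Sigma)$ with $G$ a finite simple graph and $\Sigma\subseteq E(G)$ (the odd edges). A triangle $uvw$ is odd (resp. even) if $|\Sigma\cap\{uv,uw,vw\}|$ is odd (resp. even). *)

(* Defs.v *)
From mathcomp Require Import all_boot.
Set Implicit Arguments. Unset Strict Implicit. Unset Printing Implicit Defensive.

(* Signed complete graph on vertex type T: the edges of K_n are the 2-subsets
   of T; Sigma : {set {set T}} is the set of odd edges. *)
Definition is_signature (T : finType) (Sigma : {set {set T}}) : Prop :=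
  forall e, e \in Sigma -> #|e| = 2.

Definition odd_edge (T : finType) (Sigma : {set {set T}}) (u v : T) : bool :=
  [set u; v] \in Sigma.

Definition even_triangle (T : finType) (Sigma : {set {set T}}) (u v w : T) : bool :=
  ~~ (odd_edge Sigma u v (+) odd_edge Sigma u w (+) odd_edge Sigma v w).

Definition Xrel (T : finType) (Sigma : {set {set T}}) : rel T :=
  fun v w => (v != w) &&
    [forall u, ((u != v) && (u != w)) ==> even_triangle Sigma u v w].

(* Main.v *)
Require Import Defs.
From mathcomp Require Import all_boot.

Lemma oC {T : finType} (S : {set {set T}}) a b : odd_edge S a b = odd_edge S b a.
Proof. by rewrite /odd_edge setUC. Qed.

Lemma XrelP (T : finType) (S : {set {set T}}) v w :
  reflect (v != w /\ forall u, u != v -> u != w ->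
     ~~ (odd_edge S u v (+) odd_edge S u w (+) odd_edge S v w)) (Xrel S v w).
Proof.
apply: (iffP andP) => [[H /forallP F]|[H F]]; split => //.
  by move=> u Hv Hw; have := F u; rewrite Hv Hw.
by apply/forallP => u; apply/implyP => /andP[Hv Hw]; apply: F.
Qed.

Lemma Xsym (T : finType) (S : {set {set T}}) v w : Xrel S v w -> Xrel S w v.
Proof.
move/XrelP=> [H F]; apply/XrelP; split; first by rewrite eq_sym.
move=> u Hw Hv; have := F u Hv Hw.
by rewrite (oC S w v); case: (odd_edge S u v); case: (odd_edge S u w); case: (odd_edge S v w).
Qed.

Lemma Xtrans {T : finType} {S : {set {set T}}} v w x :
  v != x -> Xrel S v w -> Xrel S w x -> Xrel S v x.
Proof.
move=> Hvx /XrelP[Hvw F] /XrelP[Hwx G]; apply/XrelP; split => // u Hv Hx.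
have Hxw : x != w by rewrite eq_sym.
have Hxv : x != v by rewrite eq_sym.
have h3 := F x Hxv Hxw.
case: (eqVneq u w) => [->|Hw].
  move: h3; rewrite (oC S x v) (oC S x w) (oC S w v).
  by case: (odd_edge S v x); case: (odd_edge S v w); case: (odd_edge S w x).
have h1 := F u Hv Hw; have h2 := G u Hw Hx.
move: h1 h2 h3; rewrite (oC S x v) (oC S x w).
by case: (odd_edge S u v); case: (odd_edge S u w); case: (odd_edge S v w);
   case: (odd_edge S u x); case: (odd_edge S w x); case: (odd_edge S v x).
Qed.

Theorem lemma3p3 (T : finType) (Sigma : {set {set T}}) :
  4 <= #|T| -> is_signature Sigma ->
  forall v w : T, v != w -> connect (Xrel Sigma) v w -> Xrel Sigma v w.
Proof.
move=> _ _ v w Hvw /connectP[p Hp Hl]. move: Hl => Hl.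
suff: (v == last v p) || Xrel Sigma v (last v p).
  by rewrite -Hl (negbTE Hvw) orFb.
clear Hl.
elim/last_ind: p Hp => [|p y IH]; first by rewrite eqxx.
rewrite rcons_path last_rcons => /andP[Hp Hy].
have {IH} := IH Hp.
case: (eqVneq v y) => [-> //|Hvy] /orP[/eqP Ev|Hx]; first by rewrite Ev Hy orbT.
by rewrite (Xtrans _ _ _ Hvy Hx Hy) orbT.
Qed.
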